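(* The semigroup $Q_3(sl_3(\mathbb{C}))$ of BZ triangles is generated by the eight elements $X, Y, P_{12},P_{23},P_{31},P_{21},P_{32},P_{13}$, where $X$ is the unique element with boundary weights $(\omega_1,\omega_1,\omega_1)$, $Y$ the unique element with boundary weights $(\omega_2,\omega_2,\omega_2)$, and for distinct $i,j\in\{1,2,3\}$, $P_{ij}$ is the unique element whose boundary weight on side $i$ is $\omega_1$, on side $j$ is $\omega_2$, and on the remaining side is $0$. The only relation among them is $X+Y=P_{12}+P_{23}+P_{31}$; that is, $\mathbb{C}[Q_3(sl_3(\mathbb{C}))]\cong\mathbb{C}[x,y,p_{12},p_{23},p_{31},p_{21},p_{32},p_{13}]/(xy-p_{12}p_{23}p_{31})$.
   Context: A Berenstein–Zelevinsky (BZ) triangle for $sl_3(\mathbb{C})$ is a $9$-tuple of nonnegative integers $(a,b,c,d,e,f,g,h,i)$ placed on the vertices of a triangular diagram with rows $a$; $b\ c$; $d\ e$; $f\ g\ h\ i$, so that the sides of the big triangle, oriented counterclockwise, read: side 1 $=(a,b,d,f)$, side 2 $=(f,g,h,i)$, side 3 $=(i,e,c,a)$, and $b,c,e,h,g,d$ (in this cyclic order) form a central hexagon. The entries must satisfy the hexagon conditions $b+c=g+h$, $c+e=d+g$, $e+h=b+d$. The boundary weight of a side read as $(x_1,x_2,x_3,x_4)$ is $(x_1+x_2)\omega_1+(x_3+x_4)\omega_2$, with $\omega_1,\omega_2$ the fundamental weights of $sl_3(\mathbb{C})$. $Q_3(sl_3(\mathbb{C}))$ is the semigroup of BZ triangles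 under entrywise addition. *)

(* Defs.v *)
From mathcomp Require Import all_boot.
Set Implicit Arguments. Unset Strict Implicit. Unset Printing Implicit Defensive.

Record tri := Tri { ta : nat; tb : nat; tc : nat; td : nat; te : nat;
                    tf : nat; tg : nat; th : nat; ti : nat }.

Definition is_BZ (t : tri) : Prop :=
  [/\ tb t + tc t = tg t + th t,
      tc t + te t = td t + tg t &
      te t + th t = tb t + td t].

Definition tri_add (s t : tri) : tri :=
  Tri (ta s + ta t) (tb s + tb t) (tc s + tc t) (td s + td t) (te s + te t)
      (tf s + tf t) (tg s + tg t) (th s + th t) (ti s + ti t).
Definition tri0 : tri := Tri 0 0 0 0 0 0 0 0 0.
Definition tri_scale (n : nat) (t : tri) : tri :=
  Tri (n * ta t) (n * tb t) (n * tc t) (n * td t) (n * te t)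
      (n * tf t) (n * tg t) (n * th t) (n * ti t).

(* Boundary weight of side s (s = 1,2,3), as the pair of coefficients
   (of omega_1, of omega_2).  Side 1 = (a,b,d,f), side 2 = (f,g,h,i),
   side 3 = (i,e,c,a); (x1,x2,x3,x4) |-> (x1+x2) w1 + (x3+x4) w2. *)
Definition bw (s : nat) (t : tri) : nat * nat :=
  match s with
  | 1 => (ta t + tb t, td t + tf t)
  | 2 => (tf t + tg t, th t + ti t)
  | _ => (ti t + te t, tc t + ta t)
  end.

(* Generators indexed by 'I_8 in the order
   0:X, 1:Y, 2:P12, 3:P23, 4:P31, 5:P21, 6:P32, 7:P13.
   gen_spec k s = prescribed boundary weight of generator k on side s. *)
Definition w1 : nat * nat := (1, 0).
Definition w2 : nat * nat := (0, 1).
Definition wP (i j s : nat) : nat * nat :=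
  if s == i then w1 else if s == j then w2 else (0, 0).
Definition gen_spec (k : nat) (s : nat) : nat * nat :=
  match k with
  | 0 => w1
  | 1 => w2
  | 2 => wP 1 2 s
  | 3 => wP 2 3 s
  | 4 => wP 3 1 s
  | 5 => wP 2 1 s
  | 6 => wP 3 2 s
  | _ => wP 1 3 s
  end.

Definition has_spec (t : tri) (k : 'I_8) : Prop :=
  forall s, s \in [:: 1; 2; 3] -> bw s t = gen_spec k s.

Definition lincomb (g : 'I_8 -> tri) (c : {ffun 'I_8 -> nat}) : tri :=
  foldr (fun k acc => tri_add (tri_scale (c k) (g k)) acc) tri0 (enum 'I_8).

Definition cadd (c d : {ffun 'I_8 -> nat}) : {ffun 'I_8 -> nat} :=
  [ffun k => c k + d k].
Definition rel_lhs : {ffun 'I_8 -> nat} :=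
  [ffun k : 'I_8 => if (val k == 0) || (val k == 1) then 1 else 0].
Definition rel_rhs : {ffun 'I_8 -> nat} :=
  [ffun k : 'I_8 => if (2 <= val k <= 4) then 1 else 0].

Inductive pcong : {ffun 'I_8 -> nat} -> {ffun 'I_8 -> nat} -> Prop :=
| pcong_base c : pcong (cadd c rel_lhs) (cadd c rel_rhs)
| pcong_refl c : pcong c c
| pcong_sym c d : pcong c d -> pcong d c
| pcong_trans c d e : pcong c d -> pcong d e -> pcong c e.

(* Main.v *)
Require Import Defs.
From mathcomp Require Import all_boot.
From mathcomp Require Import zify.

Definition G (k : 'I_8) : tri :=
  match val k with
  | 0 => Tri 0 1 0 0 1 0 1 0 0
  | 1 => Tri 0 0 1 1 0 0 0 1 0
  | 2 => Tri 0 1 0 0 0 0 0 1 0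
  | 3 => Tri 0 0 1 0 0 0 1 0 0
  | 4 => Tri 0 0 0 1 1 0 0 0 0
  | 5 => Tri 0 0 0 0 0 1 0 0 0
  | 6 => Tri 0 0 0 0 0 0 0 0 1
  | _ => Tri 1 0 0 0 0 0 0 0 0
  end.

Lemma G_ok k : is_BZ (G k) /\ has_spec (G k) k.
Proof.
case: k => [[|[|[|[|[|[|[|[|k]]]]]]]] Hk] //;
  (split; [by split | move=> s; rewrite !inE => /or3P [/eqP->|/eqP->|/eqP->]; reflexivity]).
Qed.

Lemma G_uniq k t : is_BZ t -> has_spec t k -> t = G k.
Proof.
case: t => a b c d e f g h i [/= E1 E2 E3] H.
have H1 := H 1 erefl; have H2 := H 2 erefl; have H3 := H 3 erefl.
move: H1 H2 H3.
case: k {H} => [[|[|[|[|[|[|[|[|k]]]]]]]] Hk] //= [A1 A2] [B1 B2] [C1 C2];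
  rewrite /G /=; f_equal; lia.
Qed.

Lemma lincomb_ext g g' c : (forall k, g k = g' k) -> lincomb g c = lincomb g' c.
Proof. move=> E; rewrite /lincomb; elim: (enum 'I_8) => //= k s ->; by rewrite E. Qed.

Definition cfun (x y p q r u v w : nat) : {ffun 'I_8 -> nat} :=
  [ffun k : 'I_8 => nth 0 [:: x; y; p; q; r; u; v; w] k].

Lemma e8 : enum 'I_8 = [:: inord 0; inord 1; inord 2; inord 3; inord 4; inord 5; inord 6; inord 7].
Proof.
apply: (inj_map val_inj); by rewrite val_enum_ord /= !inordK.
Qed.

Lemma cfun_eta (c : {ffun 'I_8 -> nat}) :
  c = cfun (c (inord 0)) (c (inord 1)) (c (inord 2)) (c (inord 3))
           (c (inord 4)) (c (inord 5)) (c (inord 6)) (c (inord 7)).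
Proof.
apply/ffunP => k; rewrite ffunE.
case: k => [[|[|[|[|[|[|[|[|k]]]]]]]] Hk] //=; congr (c _); apply: val_inj; by rewrite /= inordK.
Qed.

Lemma vI k : k < 8 -> \val (@inord 7 k) = k.
Proof. exact: inordK. Qed.
Lemma lincombG x y p q r u v w :
  lincomb G (cfun x y p q r u v w) = Tri w (x+p) (y+q) (y+r) (x+r) u (x+q) (y+p) v.
Proof.
rewrite /lincomb e8 /=. rewrite /G /cfun !ffunE. rewrite !inordK // !vI //.
cbv beta iota delta [tri_scale tri_add tri0 nth ta tb tc td te tf tg th ti]. rewrite !muln0 !muln1 !add0n !addn0. f_equal; lia. Qed.

Lemma cadd_cfun x y p q r u v w x' y' p' q' r' u' v' w' :
  cadd (cfun x y p q r u v w) (cfun x' y' p' q' r' u' v' w') =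
  cfun (x+x') (y+y') (p+p') (q+q') (r+r') (u+u') (v+v') (w+w').
Proof.
apply/ffunP => k; rewrite !ffunE.
by case: k => [[|[|[|[|[|[|[|[|k]]]]]]]] Hk].
Qed.

Lemma lhs_cfun : rel_lhs = cfun 1 1 0 0 0 0 0 0.
Proof. apply/ffunP => k; rewrite !ffunE; by case: k => [[|[|[|[|[|[|[|[|k]]]]]]]] Hk]. Qed.
Lemma rhs_cfun : rel_rhs = cfun 0 0 1 1 1 0 0 0.
Proof. apply/ffunP => k; rewrite !ffunE; by case: k => [[|[|[|[|[|[|[|[|k]]]]]]]] Hk]. Qed.

Lemma pcong_iter n x y p q r u v w :
  pcong (cfun x y (p+n) (q+n) (r+n) u v w) (cfun (x+n) (y+n) p q r u v w).
Proof.
elim: n x y => [|n IH] x y; first by rewrite !addn0; apply: pcong_refl.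
apply: (@pcong_trans _ (cfun (x+1) (y+1) (p+n) (q+n) (r+n) u v w) _).
  have := pcong_base (cfun x y (p+n) (q+n) (r+n) u v w).
  rewrite lhs_cfun rhs_cfun !cadd_cfun !addn0 => Hb.
  have -> : p + n.+1 = p + n + 1 by lia.
  have -> : q + n.+1 = q + n + 1 by lia.
  have -> : r + n.+1 = r + n + 1 by lia.
  exact: pcong_sym.
have -> : x + n.+1 = x + 1 + n by lia.
have -> : y + n.+1 = y + 1 + n by lia.
exact: IH.
Qed.

Lemma pcong_lin c c' : pcong c c' -> lincomb G c = lincomb G c'.
Proof.
elim => //.
- move=> d; rewrite [d]cfun_eta lhs_cfun rhs_cfun !cadd_cfun !lincombG; f_equal; lia.
- by move=> ? ? ? _ -> _ ->.
Qed.

Lemma nf_exists c : exists x y p q r u v w,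
  [/\ pcong c (cfun x y p q r u v w) & (p == 0) || (q == 0) || (r == 0)].
Proof.
rewrite [c]cfun_eta.
set x := c _; set y := c _; set p := c _; set q := c _; set r := c _;
set u := c _; set v := c _; set w := c _.
set m := minn p (minn q r).
exists (x+m), (y+m), (p-m), (q-m), (r-m), u, v, w; split.
  have := pcong_iter m x y (p-m) (q-m) (r-m) u v w.
  have -> : p - m + m = p by lia.
  have -> : q - m + m = q by lia.
  have -> : r - m + m = r by lia.
  done.
apply/orP; case: (leqP p (minn q r)) => H.
  left; apply/orP; left; apply/eqP; lia.
case: (leqP q r) => H'.
  left; apply/orP; right; apply/eqP; lia.
right; apply/eqP; lia.
Qed.

Theorem mainTheorem4 :
  (* each generator is the unique BZ triangle with its boundary weights *)
  (forall k : 'I_8, exists t, [/\ is_BZ t, has_spec t k &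
      forall t', is_BZ t' -> has_spec t' k -> t' = t]) /\
  (forall g : 'I_8 -> tri, (forall k, is_BZ (g k) /\ has_spec (g k) k) ->
     (* generation *)
     (forall t, is_BZ t -> exists c, lincomb g c = t) /\
     (* the only relation is x + y = p12 + p23 + p31 *)
     (forall c c', lincomb g c = lincomb g c' <-> pcong c c')).
Proof.
split.
  move=> k; exists (G k); have [A B] := G_ok k; split => // t'; exact: G_uniq.
move=> g Hg.
have Eg : forall k, g k = G k by move=> k; have [A B] := Hg k; exact: G_uniq.
split.
  case=> a b c d e f g' h i [/= E1 E2 E3].
  set x := minn b (minn e g').
  exists (cfun x (c + x - g') (b - x) (g' - x) (e - x) f i a).
  rewrite (lincomb_ext _ _ _ Eg) lincombG; f_equal; lia.
move=> c c'; rewrite !(lincomb_ext _ _ _ Eg); split; last exact: pcong_lin.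
move=> E.
have [x [y [p [q [r [u [v [w [P1 Q1]]]]]]]]] := nf_exists c.
have [x' [y' [p' [q' [r' [u' [v' [w' [P2 Q2]]]]]]]]] := nf_exists c'.
have := pcong_lin _ _ P1; have := pcong_lin _ _ P2; rewrite !lincombG E => -> [] *.
have Ex : cfun x y p q r u v w = cfun x' y' p' q' r' u' v' w'.
  by congr cfun; lia.
apply: (pcong_trans P1); rewrite Ex; exact: pcong_sym.
Qed.
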